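(* Let $T$ be a locally finite, infinite tree with root $o$ in which every vertex has forward degree at least $2$, let $\phi$ be an ultrametric element on $T$, let $\mu$ be a Borel probability measure on $\partial T$ with $\operatorname{supp}(\mu) = \partial T$, and let $\sigma$ be a probability measure on $[0,\infty)$ whose distribution function $F_\sigma(r) = \sigma([0,r))$ satisfies $F_\sigma(0+) = 0$, $F_\sigma(\phi(o)) < 1$, and $F_\sigma$ is strictly increasing on each set $\Lambda_\phi(\xi) = \{\phi(x) : x \in \pi(o,\xi)\}$, $\xi \in \partial T$. Then there is an ultrametric element $\phi_*$ on $T$ such that the $(\phi,\mu,\sigma)$-process coincides with the standard process associated with $\mu$ and $\phi_*$, i.e. for every $t>0$ the operators $P^t$ defined from $(\phi,\mu,\sigma)$ and from $(\phi_*,\mu,\sigma_* )$ coincide.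
   Context: $T$ is identified with its vertex set; for $x\neq o$, $x^-$ is the neighbour of $x$ on the geodesic from $o$ to $x$, and the forward degree of $x$ is $|\{y : y^-=x\}|$. $\partial T$ is the set of ends (equivalence classes of geodesic rays, two rays being equivalent if their symmetric difference is finite); $\pi(o,\xi)$ is the ray from $o$ representing $\xi$. For distinct $\xi,\eta\in\partial T$, $\xi\wedge\eta$ is the last common vertex of $\pi(o,\xi)$ and $\pi(o,\eta)$. An ultrametric element is $\phi : T \to (0,\infty)$ with $\phi(x^-) > \phi(x)$ for all $x \neq o$ and $\phi(x_n)\to 0$ along every geodesic ray $[x_0,x_1,\dots]$; it induces the ultrametric $d_\phi(\xi,\eta) = \phi(\xi\wedge\eta)$ ($\xi\neq\eta$), $d_\phi(\xi,\xi)=0$, on $\partial T$, with closed balls $B_\phi(\xi,r) = \{\eta : d_\phi(\xi,\eta)\le r\}$. Given $(\phi,\mu,\sigma)$ as in the claim, for $r>0$ and $f\in L^2(\partial T,\mu)$ put $P_r f(\xi) = \mu(B_\phi(\xi,r))^{-1}\int_{B_\phi(\xi,r)} f\,d\mu$, and for $t>0$ let $\sigma^t$ be the probability measure on $[0,\infty)$ with distribution function $F_{\sigma^t}(r) = F_\sigma(r)^t$; then $P^t f(\xi) = \int_{[0,\infty)} P_r f(\xi)\,d\sigma^t(r)$. This is a Feller Markov semigroup; the associated Hunt process on $\partial T$ is called the $(\phi,\mu,\sigma)$-process. The standard process associated with $\mu$ and an ultrametric element $\phi$ is the $(\phi,\mu,\sigma_* )$-process, where $\sigma_*$ is the inverse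 exponential distribution, $\sigma_*([0,r)) = e^{-1/r}$ for $r>0$. *)

(* Defs.v *)
From HB Require Import structures.
From mathcomp Require Import all_boot all_order all_algebra.
From mathcomp Require Import all_classical all_reals all_analysis.
Set Implicit Arguments. Unset Strict Implicit. Unset Printing Implicit Defensive.
Import Order.TTheory GRing.Theory Num.Theory.
Import numFieldNormedType.Exports.
Local Open Scope classical_set_scope.
Local Open Scope ring_scope.

(* Rooted trees.  A rooted tree with root [o] is given by its vertex  *)
(* type [V] and the predecessor map [par] : x |-> x^- (the value      *)
(* [par o] is irrelevant).  The edges are {y, par y} for y <> o.      *)
Section Tree.
Variables (V : Type) (o : V) (par : V -> V).

Definition child (x y : V) : Prop := y <> o /\ par y = x.

Definition adj (x y : V) : Prop := child x y \/ child y x.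

(* every vertex is joined to the root by iterating x |-> x^-;
   with the edge set above this makes T a tree rooted at o *)
Definition rooted_tree : Prop := forall x : V, exists n, iter n par x = o.

(* locally finite: each vertex has finitely many neighbours
   (its parent and its finitely many forward neighbours) *)
Definition locally_finite : Prop := forall x : V, finite_set [set y | child x y].

Definition fdeg_ge2 (x : V) : Prop :=
  exists y1 y2, [/\ y1 <> y2, child x y1 & child x y2].

Definition geodesic_ray (f : nat -> V) : Prop :=
  (forall n, adj (f n) (f n.+1)) /\ (forall n, f n.+2 <> f n).

Definition oray (f : nat -> V) : Prop :=
  f 0%N = o /\ forall n, child (f n) (f n.+1).

Definition ultrametric_element {R : realType} (phi : V -> R) : Prop :=
  [/\ forall x, 0 < phi x,
      forall x, x <> o -> phi x < phi (par x)
    & forall f, geodesic_ray f -> (phi \o f) @ \oo --> 0].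

(* The boundary dT: ends are identified with their unique representing
   ray pi(o, xi) from the root.  The hypothesis [Hd] is only used to
   exhibit a point (dT is nonempty), needed by the measure library. *)
Definition bdry (Hd : forall x, fdeg_ge2 x) : Type := {f : nat -> V | oray f}.

Section Point.
Variable Hd : forall x, fdeg_ge2 x.

Let ex_child (x : V) : exists y, child x y.
Proof. by case: (Hd x) => y1 [y2 [_ H _]]; exists y1. Qed.

Let next (x : V) : V := proj1_sig (cid (ex_child x)).

Let next_child x : child x (next x).
Proof. exact: (proj2_sig (cid (ex_child x))). Qed.

Let ray0_fun (n : nat) : V := iter n next o.

Let ray0_oray : oray ray0_fun.
Proof. by split=> // n; rewrite /ray0_fun iterS; exact: next_child. Qed.

Definition ray0 : bdry Hd := exist _ ray0_fun ray0_oray.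

HB.instance Definition _ := gen_eqMixin (bdry Hd).
HB.instance Definition _ := gen_choiceMixin (bdry Hd).
HB.instance Definition _ := isPointed.Build (bdry Hd) ray0.

Definition cyl (x : V) : set (bdry Hd) := [set xi | exists n, sval xi n = x].

(* dT as a measurable space: the sigma-algebra generated by the cylinders,
   which is the Borel sigma-algebra of dT *)
Definition bdryM := g_sigma_algebraType (range cyl).

(* xi /\ eta : last common vertex of pi(o,xi) and pi(o,eta) (xi <> eta) *)
Definition meet_index (xi eta : bdry Hd) : nat :=
  xget 0%N [set n | sval xi n = sval eta n /\
                    forall m, (n < m)%N -> sval xi m <> sval eta m].
Definition meet (xi eta : bdry Hd) : V := sval xi (meet_index xi eta).

Variable R : realType.

Definition dphi (phi : V -> R) (xi eta : bdry Hd) : R :=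
  if pselect (xi = eta) then 0 else phi (meet xi eta).

Definition Bphi (phi : V -> R) (xi : bdry Hd) (r : R) : set bdryM :=
  [set eta | dphi phi xi eta <= r].

Definition Lambda (phi : V -> R) (xi : bdry Hd) : set R :=
  range (phi \o sval xi).

(* supp(mu) = dT : every (open) ball around every point has positive mass *)
Definition full_support (phi : V -> R) (mu : probability bdryM R) : Prop :=
  forall (xi : bdry Hd) (r : R), 0 < r -> (0 < mu (Bphi phi xi r))%E.

Definition L2 (mu : probability bdryM R) (f : bdryM -> R) : Prop :=
  measurable_fun setT f /\ mu.-integrable setT (fun y => ((f y) ^+ 2)%:E).

Definition Pr (phi : V -> R) (mu : probability bdryM R) (r : R)
    (f : bdryM -> R) (xi : bdry Hd) : R :=
  (fine (mu (Bphi phi xi r)))^-1 *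
    fine (\int[mu]_(y in Bphi phi xi r) (f y)%:E).

(* P^t f (xi) = int_[0,oo) P_r f(xi) d sigma^t(r), where [nu] plays the role
   of sigma^t *)
Definition Pt (phi : V -> R) (mu : probability bdryM R) (nu : probability R R)
    (f : bdryM -> R) (xi : bdry Hd) : \bar R :=
  (\int[nu]_(r in `[0%R, +oo[%classic) (Pr phi mu r f xi)%:E)%E.

End Point.
End Tree.

Definition distF {R : realType} (s : probability R R) (r : R) : R :=
  fine (s `[0%R, r[%classic).

(* [nu] is the probability measure on [0,oo) with distribution function
   r |-> F(r)^t  (r > 0); for r <= 0 the value nu([0,r)) = 0 is automatic *)
Definition pow_dist {R : realType} (nu : probability R R) (F : R -> R) (t : R) : Prop :=
  nu `[0%R, +oo[%classic = 1%E /\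
  forall r, 0 < r -> nu `[0%R, r[%classic = ((F r) `^ t)%:E.

(* distribution function of the inverse exponential distribution sigma_* *)
Definition F_invexp {R : realType} (r : R) : R := expR (- r^-1).

(* Main.v *)
Require Import Defs.
From HB Require Import structures.
From mathcomp Require Import all_boot all_order all_algebra.
From mathcomp Require Import all_classical all_reals all_analysis.
From mathcomp Require Import measurable_realfun.
Import Order.TTheory GRing.Theory Num.Theory.
Import numFieldNormedType.Exports.
Local Open Scope classical_set_scope.
Local Open Scope ring_scope.

Local Open Scope classical_set_scope.
Local Open Scope ring_scope.

Section Step.
Variable R : realType.
Variable a : nat -> R.
Hypothesis a_pos : forall n, 0 < a n.
Hypothesis a_dec : forall n, a n.+1 < a n.
Hypothesis a_small : forall r, 0 < r -> exists n, a n <= r.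

Lemma a_lt m n : (m < n)%N -> a n < a m.
Proof.
elim: n => // n IH; rewrite ltnS leq_eqVlt => /predU1P[->|/IH h]; first exact: a_dec.
exact: lt_trans (a_dec n) h.
Qed.

Lemma a_le j m : (a j <= a m) = (m <= j)%N.
Proof.
case: (leqP m j) => h.
  move: h; rewrite leq_eqVlt => /predU1P[->|/a_lt/ltW]; first by rewrite lexx.
  by [].
by apply/negbTE; rewrite -ltNge; exact: a_lt.
Qed.

Definition Aset (n : nat) : set R :=
  match n with
  | 0 => [set 0]
  | 1 => `[a 0%N, +oo[%classic
  | k.+2 => `[a k.+1, a k[%classic
  end.

Definition pt (n : nat) : R := if n is k.+1 then a k else 0.

Lemma Aset_sub n : Aset n `<=` `[0, +oo[%classic.
Proof.
case: n => [|[|k]] r /=; rewrite ?in_itv /= ?andbT.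
- by move=> ->.
- by move=> h; apply: le_trans h; exact: ltW.
- by case/andP=> h _; apply: le_trans h; exact: ltW.
Qed.

Lemma Aset_cover r : 0 <= r -> exists n, Aset n r.
Proof.
rewrite le_eqVlt => /predU1P[<-|r0]; first by exists 0%N.
have [h|h] := leP (a 0%N) r.
  by exists 1%N; rewrite /= in_itv /= h.
have ex : exists n, a n <= r by exact: a_small.
pose P := fun n => a n <= r.
have exP : exists n, P n by [].
case: (ex_minnP exP) => m Pm mmin.
case: m Pm mmin => [|k] Pm mmin; first by move: Pm; rewrite /P leNgt h.
exists k.+2; rewrite /= in_itv /=; apply/andP; split; first exact: Pm.
by rewrite ltNge; apply/negP => /mmin; rewrite ltnn.
Qed.

Lemma Aset_disj n m r : Aset n r -> Aset m r -> n = m.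
Proof.
have key : forall n m r, (n < m)%N -> Aset n r -> Aset m r -> False.
  move=> {n m r} n m r nm.
  case: n nm => [|[|k]]; case: m => [|[|j]] //= nm.
  - move=> ->; rewrite in_itv /= andbT => h; move: (a_pos 0%N); rewrite ltNge h //.
  - move=> ->; rewrite in_itv /= => /andP[h _]; move: (a_pos j.+1); rewrite ltNge h //.
  - rewrite !in_itv /= andbT => h /andP[_ h2].
    by move: (le_lt_trans h h2); rewrite ltNge a_le.
  - rewrite !in_itv /= => /andP[h1 h2] /andP[h3 h4].
    have : a k.+1 < a j by exact: le_lt_trans h1 h4.
    by rewrite ltNge a_le; move: nm; rewrite !ltnS => ->.
move=> hn hm; case: (ltngtP n m) => // nm.
- by case: (key _ _ _ nm hn hm).
- by case: (key _ _ _ nm hm hn).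
Qed.

Lemma Aset_meas n : measurable (Aset n).
Proof.
case: n => [|[|k]] /=; first exact: measurable_set1.
- exact: measurable_itv.
- exact: measurable_itv.
Qed.

Lemma Aset_le n r j : Aset n r -> (a j <= r) = (a j <= pt n).
Proof.
case: n => [|[|k]] /=.
- by move=> ->.
- rewrite in_itv /= andbT => h.
  by rewrite (le_trans _ h) ?a_le //.
- rewrite in_itv /= => /andP[h1 h2].
  case: (leqP k.+1 j) => kj.
    by rewrite (le_trans _ h1) ?a_le //.
  have akj : a k <= a j by rewrite a_le -ltnS.
  have -> : (a j <= r) = false by apply/negbTE; rewrite -ltNge; exact: lt_le_trans h2 akj.
  apply/esym/negbTE; rewrite -ltNge; exact: lt_le_trans (a_dec k) akj.
Qed.


Local Open Scope ereal_scope.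
Lemma step_integral (nu : {measure set R -> \bar R}) (G : R -> \bar R) :
  (forall r, 0 <= G r) -> (forall n r, Aset n r -> G r = G (pt n)) ->
  \int[nu]_(r in `[0%R, +oo[%classic) G r = \sum_(n <oo) G (pt n) * nu (Aset n).
Proof.
move=> G0 GA.
have mD : measurable (`[0%R, +oo[%classic : set R) by exact: measurable_itv.
transitivity (\int[nu]_(r in `[0%R, +oo[%classic)
   \sum_(n <oo) (G (pt n) * (\1_(Aset n) r)%:E)).
  apply: eq_integral => r; rewrite inE /= in_itv /= andbT => r0.
  have [n0 An0] := @Aset_cover r r0.
  rewrite (@nneseriesD1 _ _ n0 xpredT); last 2 first.
  - by move=> k _; apply: mule_ge0 => //; rewrite lee_fin; exact: indic_ge0.
  - by [].
  rewrite indicE mem_set // mule1 -(GA _ _ An0) eseries0 ?adde0 // => i _ /andP[_ i0].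
  rewrite indicE memNset ?mule0 //.
  by move=> Ai; move: i0; rewrite (Aset_disj _ _ _ Ai An0) eqxx.
rewrite integral_nneseries //; last 2 first.
- move=> n; apply: emeasurable_funM; first exact: measurable_cst.
  apply/measurable_EFinP; apply: measurable_indic; exact: Aset_meas.
- by move=> n x _; apply: mule_ge0 => //; rewrite lee_fin; exact: indic_ge0.
apply: eq_eseriesr => n _.
rewrite ge0_integralZl //; try by [move=> x _; rewrite lee_fin; exact: indic_ge0
  | apply/measurable_EFinP; apply: measurable_indic; exact: Aset_meas].
by rewrite integral_indic //; [rewrite setIidl //; exact: Aset_sub | exact: Aset_meas].
Qed.

End Step.
Arguments Aset {R}.
Arguments pt {R}.

Local Open Scope classical_set_scope.
Local Open Scope ring_scope.

Section B.
Variable R : realType.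

Lemma itv_inftyD (c : R) : 0 <= c ->
  `[c, +oo[%classic = `[0%R, +oo[%classic `\` `[0%R, c[%classic.
Proof.
move=> c0; apply/seteqP; split => x /=; rewrite !in_itv /= ?andbT.
- move=> cx; split; first exact: le_trans cx.
  by apply/negP; rewrite negb_and ltNge cx orbT.
- by case=> x0 /negP; rewrite x0 /= -leNgt.
Qed.

Lemma itv_boundD (c d : R) : 0 <= c ->
  `[c, d[%classic = `[0%R, d[%classic `\` `[0%R, c[%classic.
Proof.
move=> c0; apply/seteqP; split => x /=; rewrite !in_itv /=.
- case/andP=> cx xd; split; first by rewrite (le_trans c0 cx).
  by apply/negP; rewrite negb_and ltNge cx orbT.
- by case=> /andP[x0 xd] /negP; rewrite x0 /= -leNgt => ->.
Qed.

Local Open Scope ereal_scope.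

Lemma meas_itvD (nu : probability R R) (c d : R) : (0 <= c <= d)%R ->
  nu `[c, d[%classic = nu `[0%R, d[%classic - nu `[0%R, c[%classic.
Proof.
case/andP=> c0 cd; rewrite itv_boundD // measureD //; try exact: measurable_itv.
- rewrite setIidr // => x /=; rewrite !in_itv /= => /andP[-> xc].
  by rewrite (lt_le_trans xc cd).
- apply: (le_lt_trans (probability_le1 _ _)); [exact: measurable_itv | exact: ltey].
Qed.

Lemma meas_itvinfD (nu : probability R R) (c : R) : (0 <= c)%R ->
  nu `[c, +oo[%classic = nu `[0%R, +oo[%classic - nu `[0%R, c[%classic.
Proof.
move=> c0; rewrite itv_inftyD // measureD //; try exact: measurable_itv.
- by rewrite setIidr // => x /=; rewrite !in_itv /= ?andbT => /andP[-> xc].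
- apply: (le_lt_trans (probability_le1 _ _)); [exact: measurable_itv | exact: ltey].
Qed.

End B.

Local Open Scope classical_set_scope.
Local Open Scope ring_scope.

Section C.
Variable R : realType.
Variables a : nat -> R.
Hypothesis a_pos : forall n, 0 < a n.
Hypothesis a_dec : forall n, a n.+1 < a n.
Hypothesis a_small : forall r, 0 < r -> exists n, a n <= r.

Lemma bigcap_Ia : \bigcap_n `[0%R, a n[%classic = [set 0%R].
Proof.
apply/seteqP; split => x /=.
- move=> h; have := h 0%N I; rewrite /= in_itv /= => /andP[x0 _].
  move: x0; rewrite le_eqVlt => /predU1P[//|x0].
  have [n anx] := a_small _ x0.
  by have := h n I; rewrite /= in_itv /= ltNge anx andbF.
- by move=> -> n _ /=; rewrite in_itv /= lexx a_pos.
Qed.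

Local Open Scope ereal_scope.
Lemma nu0_lim (nu : probability R R) :
  (fun n => nu `[0%R, a n[%classic) @ \oo --> nu [set 0%R].
Proof.
rewrite -bigcap_Ia.
apply: (nonincreasing_cvg_mu (F := fun n => `[0%R, a n[%classic)).
- apply: (le_lt_trans (probability_le1 _ _)); [exact: measurable_itv | exact: ltey].
- move=> n; exact: measurable_itv.
- rewrite bigcap_Ia; exact: measurable_set1.
- move=> n m nm; rewrite subsetEset => x /=; rewrite !in_itv /= => /andP[-> xa].
  by rewrite (lt_le_trans xa) // a_le.
Qed.
End C.

Section C2.
Variable R : realType.
Local Open Scope ereal_scope.

Lemma Aset_meas_eq (a b : nat -> R) (nu nus : probability R R) (F Fs : R -> R) (t : R) :
  (forall n, 0 < a n)%R -> (forall n, a n.+1 < a n)%R ->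
  (forall r, 0 < r -> exists n, a n <= r)%R ->
  (forall n, 0 < b n)%R -> (forall n, b n.+1 < b n)%R ->
  (forall r, 0 < r -> exists n, b n <= r)%R ->
  pow_dist nu F t -> pow_dist nus Fs t -> (forall n, F (a n) = Fs (b n)) ->
  forall n, nu (Aset a n) = nus (Aset b n).
Proof.
move=> ap ad asm bp bd bsm [nu1 nuF] [nus1 nusF] Fab [|[|k]] /=.
- have E : (fun n => nu `[0%R, a n[%classic) = (fun n => nus `[0%R, b n[%classic).
    by apply/funext => n; rewrite nuF // nusF // Fab.
  have h1 := @nu0_lim _ _ ap ad asm nu; rewrite E in h1.
  have h2 := @nu0_lim _ _ bp bd bsm nus.
  by rewrite -(cvg_lim _ h1) // -(cvg_lim _ h2).
- rewrite (@meas_itvinfD _ nu (a 0%N)) ?(ltW (ap _)) // (@meas_itvinfD _ nus (b 0%N)) ?(ltW (bp _)) //.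
  by rewrite nu1 nus1 nuF // nusF // Fab.
- rewrite (@meas_itvD _ nu (a k.+1) (a k)); last by rewrite (ltW (ap _)) (ltW (ad _)).
  rewrite (@meas_itvD _ nus (b k.+1) (b k)); last by rewrite (ltW (bp _)) (ltW (bd _)).
  by rewrite nuF // nusF // nuF // nusF // !Fab.
Qed.
End C2.

Local Open Scope classical_set_scope.
Local Open Scope ring_scope.

Section E.
Variable R : realType.
Implicit Types u v e : R.

Lemma h_pos v : 0 < v < 1 -> 0 < - (ln v)^-1.
Proof. by move=> /ln_lt0 h; rewrite oppr_gt0 invr_lt0. Qed.

Lemma h_mono u v : 0 < u -> u < v -> v < 1 -> - (ln u)^-1 < - (ln v)^-1.
Proof.
move=> u0 uv v1.
have v0 : 0 < v by exact: lt_trans uv.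
have lu : ln u < ln v by rewrite ltr_ln ?posrE.
have lv : ln v < 0 by apply: ln_lt0; rewrite v0 v1.
rewrite ltrN2 ltf_nV2 ?negrE //; exact: lt_trans lu lv.
Qed.

Lemma h_inv v : 0 < v -> expR (- (- (ln v)^-1)^-1) = v.
Proof. by move=> v0; rewrite invrN invrK opprK lnK ?posrE. Qed.

Lemma h_small e v : 0 < e -> 0 <= v -> v < expR (- e^-1) -> `|- (ln v)^-1| < e.
Proof.
move=> e0; rewrite le_eqVlt => /predU1P[<- _|v0 ve].
  by rewrite ln0 // invr0 oppr0 normr0.
have lv : ln v < - e^-1 by rewrite -ltr_ln ?posrE ?expR_gt0 // expRK in ve.
have lv0 : ln v < 0 by apply: lt_trans lv _; rewrite oppr_lt0 invr_gt0.
rewrite normrN normfV ltr0_norm // invf_plt ?posrE ?oppr_gt0 //.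
by rewrite ltrNr.
Qed.
End E.

Local Open Scope classical_set_scope.
Local Open Scope ring_scope.

Section Tree.
Variables (V : Type) (o : V) (par : V -> V).
Hypothesis Htree : rooted_tree o par.
Hypothesis Hd : forall x : V, fdeg_ge2 o par x.

Lemma ray_o (xi : bdry Hd) : sval xi 0%N = o.
Proof. exact: (proj2_sig xi).1. Qed.

Lemma ray_child (xi : bdry Hd) n : child o par (sval xi n) (sval xi n.+1).
Proof. exact: (proj2_sig xi).2. Qed.

Lemma oray_geo f : oray o par f -> geodesic_ray o par f.
Proof.
case=> f0 hf; split; first by move=> n; left; exact: hf.
move=> n eq2.
have [y0 py] := hf n; have [x0 px] := hf n.+1.
rewrite eq2 in px x0.
have [m hm] := Htree (f n).
have : iter m par (f n) = f n \/ iter m par (f n) = f n.+1.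
  elim: m {hm} => [|m [IH|IH]] /=; [by left | right | left].
  - by rewrite IH px.
  - by rewrite IH py.
by rewrite hm => -[h|h]; [apply: x0 | apply: y0]; rewrite -h.
Qed.

Let ex_child (x : V) : exists y, child o par x y.
Proof. by case: (Hd x) => y1 [y2 [_ H _]]; exists y1. Qed.

Definition nxt (x : V) : V := proj1_sig (cid (ex_child x)).

Lemma nxt_child x : child o par x (nxt x).
Proof. exact: (proj2_sig (cid (ex_child x))). Qed.

Lemma through x : exists (xi : bdry Hd) n, sval xi n = x.
Proof.
have [n hn] := Htree x.
elim: n x hn => [|n IH] x hn.
  by exists (ray0 Hd), 0%N; rewrite ray_o.
have [xo|xno] := pselect (x = o).
  by exists (ray0 Hd), 0%N; rewrite ray_o.
rewrite iterSr in hn.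
have [xi [k hk]] := IH _ hn.
pose g := fun m => if (m <= k)%N then sval xi m else iter (m - k.+1) nxt x.
have og : oray o par g.
  split; first by rewrite /g leq0n ray_o.
  move=> m; rewrite /g.
  case: (ltngtP m k) => mk.
  - exact: ray_child.
  - by rewrite subSn // iterS; exact: nxt_child.
  - by rewrite mk subnn /= hk; split.
by exists (exist _ g og), k.+1; rewrite /= /g ltnn subnn.
Qed.

Lemma through_child x : x <> o -> exists (xi : bdry Hd) n, sval xi n.+1 = x.
Proof.
move=> xo; have [xi [[|n] hn]] := through x.
  by rewrite ray_o in hn; case: xo.
by exists xi, n.
Qed.

End Tree.
Arguments ray_o {V o par Hd}.
Arguments ray_child {V o par Hd}.
Arguments oray_geo {V o par} Htree {f}.
Arguments through {V o par} Htree Hd x.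
Arguments through_child {V o par} Htree Hd {x}.

Local Open Scope classical_set_scope.
Local Open Scope ring_scope.

Theorem lemma3p2 (R : realType) (V : Type) (o : V) (par : V -> V)
  (Htree : rooted_tree o par) (Hlf : locally_finite o par)
  (Hinf : infinite_set [set: V])
  (Hd : forall x : V, fdeg_ge2 o par x)
  (phi : V -> R) (Hphi : ultrametric_element o par phi)
  (mu : probability (bdryM Hd) R) (Hsupp : full_support phi mu)
  (sigma : probability R R) (Hsig : sigma `[0%R, +oo[%classic = 1%E)
  (HF0 : distF sigma r @[r --> 0^'+] --> 0)
  (HFo : distF sigma (phi o) < 1)
  (HFinc : forall (xi : bdry Hd) (a b : R),
      Lambda phi xi a -> Lambda phi xi b -> a < b ->
      distF sigma a < distF sigma b) :
  exists phis : V -> R, ultrametric_element o par phis /\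
    forall t : R, 0 < t ->
    forall nu nus : probability R R,
      pow_dist nu (distF sigma) t -> pow_dist nus F_invexp t ->
      forall f : bdryM Hd -> R, L2 mu f ->
        {ae mu, forall xi : bdry Hd, Pt phi mu nu f xi = Pt phis mu nus f xi}.
Proof.
set F := distF sigma.
have F0 : forall r, 0 <= F r by move=> r; apply: fine_ge0; exact: measure_ge0.
have [Hpos Hdec Hlim] := Hphi.
have Lam : forall (xi : bdry Hd) k, Lambda phi xi (phi (sval xi k)) by move=> xi k; exists k.
have adec : forall (xi : bdry Hd) k, phi (sval xi k.+1) < phi (sval xi k).
  by move=> xi k; have [ne pe] := ray_child xi k; rewrite -pe; exact: Hdec.
have Fdec : forall (xi : bdry Hd) k, F (phi (sval xi k.+1)) < F (phi (sval xi k)).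
  by move=> xi k; apply: HFinc; [exact: Lam | exact: Lam | exact: adec].
have Fx : forall x, 0 < F (phi x) < 1.
  move=> x; have [xi [n hn]] := through Htree Hd x.
  apply/andP; split.
  - by rewrite -hn; exact: le_lt_trans (F0 _) (Fdec xi n).
  - rewrite -hn; case: n hn => [|n] hn; first by rewrite ray_o.
    apply: lt_trans HFo; rewrite -{2}(ray_o xi); apply: HFinc; try exact: Lam.
    exact: (@a_lt _ (fun k => phi (sval xi k)) (adec xi) 0%N n.+1).
pose phis := fun x => - (ln (F (phi x)))^-1.
have hlim : forall u : nat -> R, (forall n, 0 < u n) -> u @ \oo --> 0 ->
    (fun n => - (ln (F (u n)))^-1) @ \oo --> 0.
  move=> u u0 uc.
  have Fu : (fun n => F (u n)) @ \oo --> 0 by move: HF0 => /cvg_at_rightP; apply; split.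
  apply/cvgrPdist_lt => e e0.
  move/cvgrPdist_lt: Fu => /(_ _ (expR_gt0 (- e^-1))).
  apply: filterS => n; rewrite sub0r normrN ger0_norm // sub0r normrN => hv.
  exact: h_small.
have phis_ult : ultrametric_element o par phis.
  split.
  - move=> x; exact: h_pos (Fx x).
  - move=> x xo; have [xi [n hn]] := through_child Htree Hd xo.
    have [ne pe] := ray_child xi n; rewrite hn in ne pe.
    rewrite /phis pe -{1}hn; apply: h_mono.
    + by have /andP[] := Fx (sval xi n.+1).
    + exact: Fdec.
    + by have /andP[] := Fx (sval xi n).
  - move=> g gg; exact: (hlim (phi \o g) (fun n => Hpos _) (Hlim _ gg)).
exists phis; split => // t t0 nu nus hnu hnus f Lf.
apply: aeW => xi.
pose a := fun n => phi (sval xi n).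
pose b := fun n => phis (sval xi n).
have a_pos : forall n, 0 < a n by move=> n; exact: Hpos.
have a_dec : forall n, a n.+1 < a n by move=> n; exact: adec.
have small : forall u : nat -> R, (forall n, 0 < u n) -> u @ \oo --> 0 ->
    forall r, 0 < r -> exists n, u n <= r.
  move=> u u0 uc r r0.
  move/cvgrPdist_lt: uc => /(_ _ r0) [N _ hN].
  exists N; have := hN N (leqnn N); rewrite /= sub0r normrN ger0_norm ?(ltW (u0 N)) //.
  exact: ltW.
have a_cvg : a @ \oo --> 0 by exact: (Hlim _ (oray_geo Htree (proj2_sig xi))).
have a_small := small a a_pos a_cvg.
have b_pos : forall n, 0 < b n by move=> n; exact: h_pos (Fx _).
have b_dec : forall n, b n.+1 < b n.
  move=> n; apply: h_mono.
  + by have /andP[] := Fx (sval xi n.+1).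
  + exact: Fdec.
  + by have /andP[] := Fx (sval xi n).
have b_cvg : b @ \oo --> 0 by exact: (hlim a a_pos a_cvg).
have b_small := small b b_pos b_cvg.
have Fab : forall n, F (a n) = F_invexp (b n).
  by move=> n; rewrite /F_invexp /b /phis h_inv //; have /andP[] := Fx (sval xi n).
have Beq : forall (p1 p2 : V -> R) r s, (0 <= r) = (0 <= s) ->
    (forall j, (p1 (sval xi j) <= r) = (p2 (sval xi j) <= s)) ->
    Bphi (Hd:=Hd) p1 xi r = Bphi (Hd:=Hd) p2 xi s.
  move=> p1 p2 r s h0 hj; rewrite /Bphi; apply/funext => eta /=; rewrite /dphi.
  by case: pselect => ?; rewrite ?h0 // /meet hj.
have Prq : forall n r, Aset a n r -> Pr phi mu r f xi = Pr phi mu (pt a n) f xi.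
  move=> n r hr; rewrite /Pr (Beq phi phi r (pt a n)) //.
  - have : 0 <= r by have := @Aset_sub _ a a_pos n r hr; rewrite /= in_itv /= andbT.
    move=> ->; case: n {hr} => [|k] /=; first by rewrite lexx.
    by rewrite ltW.
  - by move=> j; exact: (@Aset_le _ a a_dec n r j hr).
have Prqb : forall n r, Aset b n r -> Pr phis mu r f xi = Pr phis mu (pt b n) f xi.
  move=> n r hr; rewrite /Pr (Beq phis phis r (pt b n)) //.
  - have : 0 <= r by have := @Aset_sub _ b b_pos n r hr; rewrite /= in_itv /= andbT.
    move=> ->; case: n {hr} => [|k] /=; first by rewrite lexx.
    by rewrite ltW.
  - by move=> j; exact: (@Aset_le _ b b_dec n r j hr).
have Pcross : forall n, Pr phi mu (pt a n) f xi = Pr phis mu (pt b n) f xi.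
  move=> n; rewrite /Pr (Beq phi phis (pt a n) (pt b n)) //.
  - by case: n => [|k] /=; [rewrite lexx | rewrite !ltW].
  - move=> j; case: n => [|k] /=.
    + by rewrite !leNgt (a_pos j) (b_pos j).
    + by rewrite (@a_le _ a a_dec) (@a_le _ b b_dec).
have Meq := @Aset_meas_eq _ a b nu nus F F_invexp t a_pos a_dec a_small
   b_pos b_dec b_small hnu hnus Fab.
rewrite /Pt integralE [RHS]integralE.
congr (_ - _)%E.
- rewrite (@step_integral _ a a_pos a_dec a_small); last first.
    by move=> n r hr; rewrite !funeposE /= (Prq n r hr).
    by move=> r; exact: funepos_ge0.
  rewrite (@step_integral _ b b_pos b_dec b_small); last first.
    by move=> n r hr; rewrite !funeposE /= (Prqb n r hr).
    by move=> r; exact: funepos_ge0.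
  apply: eq_eseriesr => n _; congr (_ * _)%E; last exact: Meq.
  by rewrite !funeposE /= Pcross.
- rewrite (@step_integral _ a a_pos a_dec a_small); last first.
    by move=> n r hr; rewrite !funenegE /= (Prq n r hr).
    by move=> r; exact: funeneg_ge0.
  rewrite (@step_integral _ b b_pos b_dec b_small); last first.
    by move=> n r hr; rewrite !funenegE /= (Prqb n r hr).
    by move=> r; exact: funeneg_ge0.
  apply: eq_eseriesr => n _; congr (_ * _)%E; last exact: Meq.
  by rewrite !funenegE /= Pcross.
Qed.
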